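(* Let $G$ be a cycle of cliques. Then $Z_+(G)\le |V(G)|-\operatorname{cc}(G)+2$.
   Context: $\operatorname{cc}(G)$ is the minimum number of cliques needed to cover all edges of $G$. A min-max clique covering is a clique covering of size $\operatorname{cc}(G)$ consisting of maximal cliques. $G$ is a cycle of cliques if it has a min-max clique covering $\{C_1,\dots,C_\ell\}$ such that $C_i\cap C_{i+1}\neq\emptyset$ for $i=1,\dots,\ell-1$ and $C_1\cap C_\ell\neq\emptyset$, while all other pairwise intersections $C_i\cap C_j$ are empty. $Z_+(G)$ is the positive zero forcing number: the minimum size of a set $B$ of initially black vertices such that repeated application of the rule ''let $W_1,\dots,W_k$ be the vertex sets of components of $G$ minus the black vertices; a black vertex $u$ whose only white neighbour in the subgraph induced by $W_i\cup(\text{black vertices})$ is $w$ may turn $w$ black'' eventually makes all vertices black. *)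

(* Defs.v *)
(* A simple graph G is a symmetric irreflexive relation
   e : rel T on a finite vertex type T; V(G) = T, |V(G)| = #|T|. *)
From mathcomp Require Import all_boot all_order all_algebra.
Set Implicit Arguments. Unset Strict Implicit. Unset Printing Implicit Defensive.

Section Graphs.
Variables (T : finType) (e : rel T).

Definition clique (C : {set T}) : bool :=
  [forall x in C, forall y in C, (x != y) ==> e x y].

Definition maximal_clique (C : {set T}) : bool := maxset clique C.

Definition edge_cover (P : {set {set T}}) : bool :=
  [forall x, forall y, e x y ==> [exists C in P, (x \in C) && (y \in C)]].

Definition clique_covering (P : {set {set T}}) : bool :=
  [forall C in P, clique C] && edge_cover P.

(** The default value #|{set T}|
    of the iterated minimum is an upper bound for the size of every family
    of vertex sets, and a clique covering always exists for a simple graph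
    (e.g. all cliques), so this is exactly the minimum. *)
Definition cc : nat :=
  \big[minn/#|{set T}|]_(P : {set {set T}} | clique_covering P) #|P|.

Definition minmax_clique_covering (s : seq {set T}) : bool :=
  [&& uniq s, size s == cc, all maximal_clique s & clique_covering [set C in s]].

(** cycle of cliques (indices shifted to 0 .. l-1) *)
Definition cycle_of_cliques : Prop :=
  exists s : seq {set T},
    let l := size s in
    let C := fun i => nth set0 s i in
    [/\ minmax_clique_covering s,
        0 < l,
        (forall i, i.+1 < l -> C i :&: C i.+1 != set0),
        C 0 :&: C l.-1 != set0 &
        (forall i j, i < j < l -> j != i.+1 -> ~~ ((i == 0) && (j == l.-1)) ->
            C i :&: C j = set0)].

Definition white_rel (B : {set T}) : rel T :=
  [rel x y | [&& x \notin B, y \notin B & e x y]].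

(* black u may force white w: w lies in a component W of G - B, and w is the
   only white neighbour of u in G[W ∪ B] *)
Definition pforce (B : {set T}) (u w : T) : bool :=
  [&& u \in B, w \notin B, e u w &
      [forall v, [&& v \notin B, connect (white_rel B) w v & e u v] ==> (v == w)]].

Definition pforce_step (B : {set T}) : {set T} :=
  B :|: [set w | [exists u, pforce B u w]].

(* the final colouring: iterating #|T| rounds reaches the fixpoint *)
Definition pclosure (B : {set T}) : {set T} := iter #|T| pforce_step B.

Definition pos_zero_forcing_set (B : {set T}) : bool := pclosure B == setT.

Lemma pzf_exists : exists k, [exists B : {set T}, (#|B| == k) && pos_zero_forcing_set B].
Proof.
exists #|[set: T]|; apply/existsP; exists setT; rewrite eqxx /=.
rewrite /pos_zero_forcing_set /pclosure; elim: #|T| => //= n /eqP ->.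
by apply/eqP/setP=> x; rewrite !inE.
Qed.

Definition Zplus : nat := ex_minn pzf_exists.

End Graphs.

(* Main.v *)
Require Import Defs.
From mathcomp Require Import all_boot all_order all_algebra zify.
Import Order.TTheory GRing.Theory Num.Theory.
Set Implicit Arguments. Unset Strict Implicit. Unset Printing Implicit Defensive.

Lemma chain (T:finType) (e: rel T) (k:nat) (f g : nat -> T) :
 (forall i j, i < k -> j < k -> f i = f j -> i = j) ->
 (forall i j, i <= j < k -> g i <> f j) ->
 (forall i, i < k -> e (g i) (f i)) ->
 (forall i j, i <= j < k -> e (g i) (f j) -> j = i) ->
 (Zplus e + k <= #|T|)%N.
Proof.
move=> finj gnf ef eu.
pose S i := [set x | [exists j : 'I_k, (i <= j) && (x == f j)]].
pose B := ~: S 0.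
have stepS : forall A : {set T}, A \subset pforce_step e A by move=> A; apply: subsetUl.
have claim : forall i, i <= k -> ~: S i \subset iter i (pforce_step e) B.
  elim=> [|i IH] Hi /=; first exact: subxx.
  have IH' := IH (ltnW Hi).
  apply/subsetP=> x; rewrite !inE => Hx.
  case: (boolP (x \in S i)) => xS; last first.
    apply/orP; left; apply: (subsetP IH'); by rewrite inE.
  move: xS; rewrite inE => /existsP [j /andP [ij /eqP xj]].
  have ji : val j = i.
    apply/eqP; rewrite eqn_leq ij andbT leqNgt; apply/negP => ltij.
    move/negP: Hx; apply; apply/existsP; exists j; by rewrite ltij xj eqxx.
  set B' := iter i _ B.
  case: (boolP (x \in B')) => xB; first by apply/orP; left.
  apply/orP; right; apply/existsP.
  exists (g i); rewrite /pforce; apply/and4P; split => //.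
  - apply: (subsetP IH'); rewrite !inE; apply/negP => /existsP [j' /andP [ij' /eqP gj']].
    by apply: (gnf i j'); rewrite ?ij' ?ltn_ord.
  - by rewrite xj ji; apply: ef.
  - apply/forallP=> v; apply/implyP => /and3P [vB _ ev].
    have : v \in S i by apply/negPn/negP => vS; move/negP: vB; apply; apply: (subsetP IH'); rewrite inE.
    rewrite inE => /existsP [j' /andP [ij' /eqP vj']].
    rewrite vj' in ev *; rewrite xj ji.
    by rewrite (eu i j') // ij' ltn_ord.
have S0 : S 0 = (fun j : 'I_k => f j) @: setT.
  apply/setP=> x; rewrite inE; apply/existsP/imsetP.
    by move=> [j /andP [_ /eqP ->]]; exists j.
  by move=> [j _ ->]; exists j; rewrite eqxx.
have cS0 : #|S 0| = k.
  rewrite S0 card_imset ?cardsT ?card_ord //.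
  by move=> a b /= H; apply/val_inj/finj; rewrite ?ltn_ord.
have kT : k <= #|T| by rewrite -cS0 max_card.
have Sk : S k = set0.
  apply/setP=> x; rewrite inE in_set0; apply/negbTE/existsP => [[j /andP [kj _]]].
  by move: (ltn_ord j); rewrite ltnNge kj.
have itk := claim k (leqnn k); rewrite Sk setC0 in itk.
have mono : forall m, k <= m -> iter m (pforce_step e) B = setT.
  elim=> [|m IH] km.
    by move: km; rewrite leqn0 => /eqP k0; apply/eqP; rewrite eqEsubset subsetT; rewrite k0 in itk.
  case: (leqP k m) => [km' | mk].
    by rewrite /= IH //; apply/eqP; rewrite eqEsubset subsetT /=; apply: stepS.
  have keq : k = m.+1 by apply/eqP; rewrite eqn_leq km mk.
  by move: itk; rewrite keq => itk; apply/eqP; rewrite eqEsubset subsetT.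
have pzB : pos_zero_forcing_set e B by rewrite /pos_zero_forcing_set /pclosure mono.
have cB : #|B| = #|T| - k by rewrite /B -cS0 -(cardsC (S 0)) addKn.
suff : (Zplus e <= #|T| - k)%N by lia.
rewrite /Zplus; case: ex_minnP => m _ Hm; apply: Hm.
by apply/existsP; exists B; rewrite cB eqxx pzB.
Qed.

Lemma mainNat (T : finType) (e : rel T) :
  symmetric e -> irreflexive e -> cycle_of_cliques e ->
  (Zplus e + cc e <= #|T| + 2)%N.
Proof.
move=> sym irr [s [mm l0 cons wrap disj]].
move/and4P: mm => [us /eqP scc allm cov].
move/andP: cov => [/forallP cliqs /forallP ecov].
rewrite -scc.
set l := size s in l0 cons wrap disj *.
set C := fun i => nth set0 s i in cons wrap disj *.
have cover : forall u v, e u v -> exists m, [/\ m < l, u \in C m & v \in C m].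
  move=> u v euv; have /forallP := ecov u => /(_ v) /implyP /(_ euv) /existsP [D /andP [Ds /andP [uD vD]]].
  move: Ds; rewrite inE => Ds; exists (index D s); rewrite /C nth_index // index_mem //.
have cliq : forall m u v, m < l -> u \in C m -> v \in C m -> u != v -> e u v.
  move=> m u v ml uC vC uv; have := cliqs (C m); rewrite inE mem_nth // => /= /forallP /(_ u) /implyP /(_ uC).
  by move=> /forallP /(_ v) /implyP /(_ vC) /implyP /(_ uv).
have [v0 _] : exists v0, v0 \in C 0 :&: C l.-1 by apply/set0Pn.
suff [k [Hz lk]] : exists k, (Zplus e + k <= #|T|)%N /\ (l <= k + 2)%N by lia.
case: (leqP l 2) => l2.
  exists 0; split; last by lia.
  apply: (@chain T e 0 (fun _ => v0) (fun _ => v0)) => i; try move=> j; by rewrite ?ltn0 ?andbF.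
case: (leqP l 3) => l3.
  have C01 : C 0 != C 1.
    rewrite /C nth_uniq // -/l; lia.
  have [x x01] : exists x, x \in C 0 :&: C 1 by apply/set0Pn; apply: (cons 0); lia.
  move: x01; rewrite inE => /andP [x0 x1].
  have [y Hy] : exists y, (y \in C 0) != (y \in C 1).
    case: (boolP [exists y, (y \in C 0) != (y \in C 1)]) => [/existsP //|/existsPn H].
    move/negP: C01 => C01; exfalso; apply: C01; apply/eqP/setP => y.
    by have := H y; rewrite negbK => /eqP.
  have xy : x != y by apply/negP => /eqP xy; move: Hy; rewrite -xy x0 x1.
  have exy : e x y.
    case: (boolP (y \in C 0)) => y0; first by apply: (cliq 0) => //; lia.
    move: Hy; rewrite (negbTE y0) /= => y1; by apply: (cliq 1) => //; lia.
  exists 1; split; last by rewrite -/l; lia.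
  apply: (@chain T e 1 (fun _ => y) (fun _ => x)).
  + move=> i j; lia.
  + by move=> i j _ /eqP; apply/negP.
  + by move=> i _.
  + move=> i j; lia.
pose x i := odflt v0 [pick v in C i :&: C i.+1].
have xmem : forall i, i.+1 < l -> x i \in C i /\ x i \in C i.+1.
  move=> i il; rewrite /x; case: pickP => [v /=|H]; first by rewrite inE => /andP.
  have /set0Pn [v Hv] := cons i il; by move: (H v); rewrite Hv.
have pair : forall a b v, a < b < l -> v \in C a -> v \in C b -> b = a.+1 \/ (a = 0 /\ b = l.-1).
  move=> a b v abl va vb.
  case: (eqVneq b a.+1) => [->|ba]; first by left.
  case: (boolP ((a == 0) && (b == l.-1))) => [/andP [/eqP -> /eqP ->]|H]; first by right.
  have := disj a b abl ba H => /setP /(_ v); by rewrite inE va vb in_set0.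
have memb : forall i m, i.+1 < l -> m < l -> x i \in C m -> m = i \/ m = i.+1.
  move=> i m il ml xm; have [xi xi1] := xmem i il.
  case: (ltngtP m i) => [mi|im|->]; last by left.
  - have h1 := pair m i (x i) ltac:(lia) xm xi.
    have h2 := pair m i.+1 (x i) ltac:(lia) xm xi1.
    lia.
  - case: (eqVneq m i.+1) => [->|mi1]; first by right.
    have h1 := pair i m (x i) ltac:(lia) xi xm.
    have h2 := pair i.+1 m (x i) ltac:(lia) xi1 xm.
    lia.
exists (l - 2); split; last by rewrite -/l; lia.
have gnf : forall i j, i <= j < l - 2 -> x i <> x j.+1.
  move=> i j ij xij.
  have [xj1 xj2] := xmem j.+1 ltac:(lia).
  rewrite -xij in xj1 xj2.
  have h1 := memb i j.+1 ltac:(lia) ltac:(lia) xj1.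
  have h2 := memb i j.+2 ltac:(lia) ltac:(lia) xj2.
  lia.
apply: (@chain T e (l - 2) (fun i => x i.+1) x).
+ move=> i j il jl xij.
  have [xi1 xi2] := xmem i.+1 ltac:(lia).
  have [xj1 xj2] := xmem j.+1 ltac:(lia).
  rewrite xij in xi1 xi2.
  have h1 := memb j.+1 i.+1 ltac:(lia) ltac:(lia) xi1.
  rewrite -xij in xj1.
  have h2 := memb i.+1 j.+1 ltac:(lia) ltac:(lia) xj1.
  lia.
+ exact: gnf.
+ move=> i il; have [_ a] := xmem i ltac:(lia); have [b _] := xmem i.+1 ltac:(lia).
  apply: (cliq i.+1) => //; first lia.
  by apply/eqP; apply: gnf; lia.
+ move=> i j ij eij; have [m [ml h1 h2]] := cover _ _ eij.
  have := memb i m ltac:(lia) ml h1; have := memb j.+1 m ltac:(lia) ml h2; lia.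
Qed.

Local Open Scope ring_scope.

Theorem mainTheorem8 (T : finType) (e : rel T) :
  symmetric e -> irreflexive e -> cycle_of_cliques e ->
  (Zplus e)%:Z <= (#|T|)%:Z - (cc e)%:Z + 2.
Proof.
move=> sym irr cyc; have := mainNat sym irr cyc; lia.
Qed.
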